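(* (1) Let $A,B$ be irreducible $\{0,1\}$-matrices which are not permutation matrices. If the one-sided topological Markov shifts $(X_A,\sigma_A)$ and $(X_B,\sigma_B)$ are topologically conjugate, then they are coded equivalent. (2) Let $A$ be an irreducible non-permutation $\{0,1\}$-matrix and let $\mathcal{C}\subset B_*(X_A)$ be a right Markov code for $(X_A,\sigma_A)$. Then $(X_A,\sigma_A)$ and $(X_{A(\mathcal{C})},\sigma_{A(\mathcal{C})})$ are coded equivalent.
   Context: For an $N\times N$ matrix $A$ with entries in $\{0,1\}$, $\Sigma_A=\{1,\dots,N\}$, $X_A$ is the set of sequences $(x_n)_{n\in\mathbb{N}}$ in $\Sigma_A$ with $A(x_n,x_{n+1})=1$ for all $n$, with product topology and shift $\sigma_A$. $B_k(X_A)$ is the set of admissible words of length $k$, $B_*(X_A)$ the union over $k\ge0$ (including the empty word). For a word $w=w_1\cdots w_\ell$, $\sigma_A(w)=w_2\cdots w_\ell$. A code is a nonempty $\mathcal{C}\subset B_*(X_A)$ such that any equality of concatenations $\omega(i_1)\cdots\omega(i_k)=\omega(j_1)\cdots\omega(j_n)$ of words of $\mathcal{C}$ forces $n=k$ and $\omega(i_m)=\omega(j_m)$ for all $m$; a prefix code is a code in which no word is a prefix of another. A finite prefix code $\mathcal{C}=\{\omega(1),\dots,\omega(M)\}\subset B_*(X_A)$, $\Sigma_{A(\mathcal{C})}=\{1,\dots,M\}$, is a right Markov code for $(X_A,\sigma_A)$ if: (i) for every $\gamma\in B_*(X_A)$ there is $\eta\in B_*(X_A)$ with $\gamma\eta\in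 B_*(X_A)$ and a unique finite sequence $(i_1,\dots,i_k)$ in $\Sigma_{A(\mathcal{C})}$ with $\gamma\eta=\omega(i_1)\cdots\omega(i_k)$; (ii) there is $L\in\mathbb{N}$ such that for all $i_1,\dots,i_L$ with $\omega(i_1)\cdots\omega(i_L)\in B_*(X_A)$ there exist $j_1,\dots,j_k\in\Sigma_{A(\mathcal{C})}$ with $\sigma_A(\omega(i_1))\omega(i_2)\cdots\omega(i_L)=\omega(j_1)\cdots\omega(j_k)$; (iii) for every $i,j$ there are $n_1,\dots,n_l$ with $\omega(i)\omega(n_1)\cdots\omega(n_l)\omega(j)\in B_*(X_A)$. The trivial right Markov code is $\Sigma_A$ itself (all words of length 1). $A(\mathcal{C})(i,j)=A(r(\omega(i)),s(\omega(j)))$, where $s,r$ give the first and last symbols. Topological conjugacy of $(X_A,\sigma_A)$ and $(X_B,\sigma_B)$: a homeomorphism $h:X_A\to X_B$ with $h\circ\sigma_A=\sigma_B\circ h$. For irreducible non-permutation $A,B$, the shifts are elementary coded equivalent if there exist right Markov codes $\mathcal{C}_1$ for $(X_A,\sigma_A)$ and $\mathcal{C}_2$ for $(X_B,\sigma_B)$ with $(X_{A(\mathcal{C}_1)},\sigma_{A(\mathcal{C}_1)})$ and $(X_{B(\mathcal{C}_2)},\sigma_{B(\mathcal{C}_2)})$ topologically conjugate; coded equivalent if there is a finite chain $A=A_0,\dots,A_m=B$ of irreducible non-permutation $\{0,1\}$-matrices with consecutive shifts elementary coded equivalent. *)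

(* Defs.v *)
From mathcomp Require Import all_boot all_fingroup.
From mathcomp Require Import matrix.

Set Implicit Arguments.
Unset Strict Implicit.
Unset Printing Implicit Defensive.

Definition zo_mat (N : nat) := 'M[bool]_N.

(* Admissible (finite) words, including the empty word: B_*(X_A). *)
Definition adm (N : nat) (A : zo_mat N) (w : seq 'I_N) : bool :=
  sorted (fun a b => A a b) w.

Definition irreducible (N : nat) (A : zo_mat N) : Prop :=
  forall i j : 'I_N, exists w : seq 'I_N, adm A (i :: rcons w j).

Definition is_perm_matrix (N : nat) (A : zo_mat N) : Prop :=
  exists s : {perm 'I_N}, forall i j, A i j = (s i == j).

Definition irr_nonperm (N : nat) (A : zo_mat N) : Prop :=
  irreducible A /\ ~ is_perm_matrix A.

Definition inX (N : nat) (A : zo_mat N) (x : nat -> 'I_N) : Prop :=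
  forall n, A (x n) (x n.+1).

Definition XA (N : nat) (A : zo_mat N) := {x : nat -> 'I_N | inX A x}.

Lemma inX_shift (N : nat) (A : zo_mat N) (x : XA A) :
  inX A (fun n => proj1_sig x n.+1).
Proof. by case: x => x Hx n; apply: Hx. Qed.

Definition shiftX (N : nat) (A : zo_mat N) (x : XA A) : XA A :=
  exist _ (fun n => proj1_sig x n.+1) (inX_shift x).

(* Continuity for the (subspace of the) product topology of discrete spaces:
   cylinder sets form a basis. *)
Definition cont_map (N M : nat) (A : zo_mat N) (B : zo_mat M)
  (h : XA A -> XA B) : Prop :=
  forall (x : XA A) (n : nat), exists m : nat, forall y : XA A,
    (forall k, k < m -> proj1_sig y k = proj1_sig x k) ->
    forall k, k < n -> proj1_sig (h y) k = proj1_sig (h x) k.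

Definition top_conj (N M : nat) (A : zo_mat N) (B : zo_mat M) : Prop :=
  exists (h : XA A -> XA B) (g : XA B -> XA A),
    cancel h g /\ cancel g h /\ cont_map h /\ cont_map g /\
    forall x : XA A, h (shiftX x) = shiftX (h x).

Definition concat_code (N M : nat) (om : 'I_M -> seq 'I_N) (s : seq 'I_M)
  : seq 'I_N := flatten (map om s).

(* A finite prefix code C = {om 1, ..., om M} (distinct words) which is a
   right Markov code for (X_A, sigma_A). *)
Definition right_markov_code (N : nat) (A : zo_mat N) (M : nat)
  (om : 'I_M -> seq 'I_N) : Prop :=
  [/\ 0 < M /\
      injective om,
      (forall i, adm A (om i)),
      (forall s t : seq 'I_M,
         concat_code om s = concat_code om t -> s = t),
      (forall i j : 'I_M, i != j -> ~~ prefix (om i) (om j))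
    & [/\
        (forall gamma : seq 'I_N, adm A gamma ->
           exists eta : seq 'I_N, adm A (gamma ++ eta) /\
             exists! s : seq 'I_M, gamma ++ eta = concat_code om s),
        (* (ii): here s = (i_2, ..., i_L), so size s = L - 1 *)
        (exists L : nat, forall (i : 'I_M) (s : seq 'I_M), size s = L ->
           adm A (om i ++ concat_code om s) ->
           exists t : seq 'I_M, behead (om i) ++ concat_code om s = concat_code om t)
      &
        (forall i j : 'I_M, exists s : seq 'I_M,
           adm A (om i ++ concat_code om s ++ om j))]].

Definition s_sym (N : nat) (w : seq 'I_N) : option 'I_N :=
  if w is a :: _ then Some a else None.
Definition r_sym (N : nat) (w : seq 'I_N) : option 'I_N := s_sym (rev w).

Definition code_mat (N : nat) (A : zo_mat N) (M : nat)
  (om : 'I_M -> seq 'I_N) : zo_mat M :=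
  (\matrix_(i < M, j < M)
    match r_sym (om i), s_sym (om j) with
    | Some a, Some b => A a b
    | _, _ => false
    end)%R.

Definition zmat := {N : nat & zo_mat N}.
Definition mkz (N : nat) (A : zo_mat N) : zmat := existT _ N A.

Definition irr_np (a : zmat) : Prop := irr_nonperm (projT2 a).

Definition elem_coded_equiv (a b : zmat) : Prop :=
  irr_np a /\ irr_np b /\
  exists (M1 : nat) (om1 : 'I_M1 -> seq 'I_(projT1 a))
         (M2 : nat) (om2 : 'I_M2 -> seq 'I_(projT1 b)),
    right_markov_code (projT2 a) om1 /\ right_markov_code (projT2 b) om2 /\
    top_conj (code_mat (projT2 a) om1) (code_mat (projT2 b) om2).

Inductive coded_chain : zmat -> zmat -> Prop :=
| cc_nil a : irr_np a -> coded_chain a a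
| cc_cons a b c : elem_coded_equiv a b -> coded_chain b c -> coded_chain a c.

Definition coded_equiv (N M : nat) (A : zo_mat N) (B : zo_mat M) : Prop :=
  coded_chain (mkz A) (mkz B).

(* Main.v *)
Require Import Defs.
From mathcomp Require Import all_boot all_fingroup.
From mathcomp Require Import matrix.
From mathcomp Require Import zify.

Set Implicit Arguments.
Unset Strict Implicit.
Unset Printing Implicit Defensive.

Definition triv (N : nat) : 'I_N -> seq 'I_N := fun i => [:: i].

Lemma concat_triv N (s : seq 'I_N) : concat_code (@triv N) s = s.
Proof. by rewrite /concat_code; elim: s => //= x s ->. Qed.

Lemma irrnp_pos N (A : zo_mat N) : irr_nonperm A -> 0 < N.
Proof.
case: N A => // A [_ H]; exfalso; apply: H; by exists 1%g => -[].
Qed.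

Lemma triv_code N (A : zo_mat N) : irreducible A -> 0 < N ->
  right_markov_code A (@triv N).
Proof.
move=> Hirr HN; split.
- by split=> // i j [].
- by [].
- by move=> s t; rewrite !concat_triv.
- by move=> i j ij /=; rewrite (negbTE ij).
split.
- move=> g Hg; exists [::]; rewrite cats0; split=> //.
  exists g; split; first by rewrite concat_triv.
  by move=> t; rewrite concat_triv.
- by exists 0 => i [|//] _ _; exists [::].
- move=> i j; have [w Hw] := Hirr i j; exists w.
  by rewrite concat_triv /= cats1.
Qed.

Lemma code_mat_triv N (A : zo_mat N) : code_mat A (@triv N) = A.
Proof. by apply/matrixP => i j; rewrite mxE. Qed.

Lemma top_conj_refl N (A : zo_mat N) : top_conj A A.
Proof.
exists id, id; split=> //; split=> //; split; last split=> //;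
  by move=> x n; exists n => y H k kn; apply: H.
Qed.

Lemma r_sym_cons N (a : 'I_N) u : r_sym (a :: u) = Some (last a u).
Proof. by rewrite /r_sym (lastI a u) rev_rcons. Qed.

Lemma adm_concat N (A : zo_mat N) M (om : 'I_M -> seq 'I_N) :
  (forall i, om i != [::]) -> forall s, adm A (concat_code om s) ->
  adm (code_mat A om) s.
Proof.
move=> Hne; elim=> // i s IH.
rewrite /concat_code /= -/(concat_code om s).
case Hi: (om i) (Hne i) => [//|a u] _.
case: s IH => [//|j s] IH.
rewrite /concat_code /= -/(concat_code om s).
case Hj: (om j) (Hne j) => [//|b v] _.
rewrite /adm /= cat_path => /andP[_].
rewrite /= => /andP[Hab Hrest].
rewrite /adm /= in IH *; apply/andP; split.
  by rewrite mxE Hi Hj r_sym_cons.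
apply: IH; rewrite /concat_code /= Hj /=; exact: Hrest.
Qed.

Lemma code_ne N (A : zo_mat N) M (om : 'I_M -> seq 'I_N) :
  right_markov_code A om -> forall i, om i != [::].
Proof.
case=> _ _ Hc _ _ i; apply/eqP => Hi.
have := Hc [:: i] [::]; rewrite /concat_code /= Hi => /(_ erefl) //.
Qed.

Lemma code_irr N (A : zo_mat N) M (om : 'I_M -> seq 'I_N) :
  right_markov_code A om -> irreducible (code_mat A om).
Proof.
move=> Hc i j; have Hne := code_ne Hc.
case: Hc => _ _ _ _ [_ _ H3]; have [s Hs] := H3 i j; exists s.
apply: adm_concat => //.
by move: Hs; rewrite /concat_code /= map_rcons flatten_rcons.
Qed.

Lemma branching N (A : zo_mat N) : irr_nonperm A ->
  exists a b c, [/\ b != c, A a b & A a c].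
Proof.
move=> [Hirr Hnp].
have Hrow : forall a, exists b, A a b.
  move=> a; have [w] := Hirr a a; case: w => [|x w] /=.
    by rewrite /adm /= => /andP[H _]; exists a.
  by rewrite /adm /= => /andP[H _]; exists x.
have Hcol : forall b, exists a, A a b.
  move=> b; have [w] := Hirr b b; rewrite /adm /= rcons_path => /andP[_ H].
  by exists (last b w).
case: (boolP [exists a, exists b, exists c, [&& b != c, A a b & A a c]]).
  move/existsP=> [a /existsP[b /existsP[c /and3P[H1 H2 H3]]]].
  by exists a, b, c.
move=> Hno; exfalso; apply: Hnp.
have Huniq : forall a b c, A a b -> A a c -> b = c.
  move=> a b c Hb Hc; apply/eqP; apply: contraNT Hno => Hbc.
  apply/existsP; exists a; apply/existsP; exists b; apply/existsP; exists c.
  by rewrite Hbc Hb Hc.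
pose f a := odflt a [pick b | A a b].
have Hf : forall a b, A a b = (f a == b).
  move=> a b; rewrite /f; case: pickP => [x Hx|H] /=.
    apply/idP/eqP => [Hb|<-//]; exact: Huniq Hx Hb.
  by have [y Hy] := Hrow a; rewrite H in Hy.
have fsurj : forall b, exists a, f a = b.
  by move=> b; have [a Ha] := Hcol b; exists a; apply/eqP; rewrite -Hf.
pose g b := odflt b [pick a | f a == b].
have fg : cancel g f.
  move=> b; rewrite /g; case: pickP => [x /eqP //|H] /=.
  by have [a Ha] := fsurj b; move: (H a); rewrite Ha eqxx.
have [g' gg' g'g] := injF_bij (can_inj fg).
have finj : injective f.
  move=> a1 a2 E; rewrite -(g'g a1) -(g'g a2); congr g.
  by rewrite -[in LHS](g'g a1) -[in RHS](g'g a2) !fg in E.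
exists (perm finj) => i j; by rewrite permE Hf.
Qed.

Lemma adm_cat_loop N (A : zo_mat N) (L r : seq 'I_N) a :
  adm A (rcons L a) -> adm A (a :: r) -> adm A (L ++ a :: r).
Proof.
case: L => [//|x L]; rewrite /adm /= rcons_path cat_path /=.
by move=> /andP[-> ->] ->.
Qed.

Lemma adm_loops N (A : zo_mat N) a (ls : seq (seq 'I_N)) :
  (forall L, L \in ls -> adm A (rcons L a) /\ exists u, L = a :: u) ->
  adm A (rcons (flatten ls) a).
Proof.
elim: ls => [//|L ls IH] H /=.
rewrite rcons_cat.
have [HL _] := H L (mem_head _ _).
have IH' := IH (fun L' HL' => H L' (@mem_behead _ (L :: ls) _ HL')).
have [r Hr] : exists r, rcons (flatten ls) a = a :: r.
  case: ls H {IH IH'} => [|L' ls] H /=; first by exists [::].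
  have [_ [u ->]] := H L' (@mem_behead _ (L :: L' :: ls) _ (mem_head _ _)).
  by exists (rcons (u ++ flatten ls) a).
rewrite Hr in IH' *; exact: adm_cat_loop.
Qed.

Lemma stream M (C : zo_mat M) (s0 : 'I_M -> 'I_M) N (om : 'I_M -> seq 'I_N) :
  (forall x y, C x y = (s0 x == y)) -> forall s t i, adm C (i :: s) -> adm C (i :: t) ->
  (exists r, concat_code om (i::s) = concat_code om (i::t) ++ r) \/
  (exists r, concat_code om (i::t) = concat_code om (i::s) ++ r).
Proof.
move=> HC; elim=> [|j s IH] [|j' t] i /=.
- by left; exists [::]; rewrite cats0.
- by right; exists (concat_code om (j' :: t)); rewrite /concat_code /= cats0.
- by left; exists (concat_code om (j :: s)); rewrite /concat_code /= cats0.
rewrite /adm /= !HC => /andP[/eqP Hj Hs] /andP[/eqP Hj' Ht].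
subst j j'; case: (IH t (s0 i) Hs Ht) => [[r Hr]|[r Hr]]; [left|right]; exists r;
  move: Hr; rewrite /concat_code /= => ->; by rewrite catA.
Qed.

Definition rep N n (L : seq 'I_N) := flatten (nseq n L).

Lemma size_rep N n (L : seq 'I_N) : size (rep n L) = n * size L.
Proof. by elim: n => //= n IH; rewrite /rep /= size_cat -/(rep n L) IH mulSn. Qed.

Lemma rep_add N m n (L : seq 'I_N) : rep (m + n) L = rep m L ++ rep n L.
Proof. by rewrite /rep nseqD flatten_cat. Qed.

Lemma catL_inj T (X u v : seq T) : X ++ u = X ++ v -> u = v.
Proof. by elim: X => //= x X IH [] /IH. Qed.

Lemma code_nonperm N (A : zo_mat N) M (om : 'I_M -> seq 'I_N) :
  irr_nonperm A -> right_markov_code A om -> ~ is_perm_matrix (code_mat A om).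
Proof.
move=> HA Hc [sg Hsg].
have Hne := code_ne Hc.
case: (Hc) => -[HM _] _ _ _ [Hi _ _].
have [a [b [c [bc Hab Hac]]]] := branching HA.
have [Hirr _] := HA.
have [w1 Hw1] := Hirr b a; have [w2 Hw2] := Hirr c a.
pose P := a :: b :: w1; pose Q := a :: c :: w2.
pose W (k : 'I_M.+1) := rcons (rep (k * size Q) P ++ rep ((M - k) * size P) Q) a.
have admW : forall k, adm A (W k).
  move=> k; rewrite /W /rep -flatten_cat; apply: adm_loops => L.
  rewrite mem_cat !mem_nseq => /orP[/andP[_ /eqP->]|/andP[_ /eqP->]].
    by split; [rewrite /adm /= Hab; exact: Hw1 | exists (b :: w1)].
  by split; [rewrite /adm /= Hac; exact: Hw2 | exists (c :: w2)].
have sizeW : forall k, size (W k) = (M * size P * size Q).+1.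
  move=> k; rewrite /W size_rcons size_cat !size_rep; congr S.
  have := ltn_ord k; move: (size P) (size Q) (val k) => p q kk Hk; nia.
have key : forall k l : 'I_M.+1, k < l -> W k != W l.
  move=> k l kl; rewrite /W.
  have Hl : l <= M by rewrite -ltnS.
  have -> : l * size Q = k * size Q + ((l - k) * size Q - 1).+1.
    rewrite /Q /=; move: (size w2) => q; nia.
  have -> : (M - k) * size P = ((M - k) * size P - 1).+1.
    rewrite /P /=; move: (size w1) => p; nia.
  rewrite rep_add -!catA !rcons_cat; apply/eqP => /catL_inj.
  rewrite /rep /= /P /Q /= => -[] /esym /eqP; by rewrite (negbTE bc).
have Winj : injective W.
  move=> k l E; case: (ltngtP k l) => [kl|lk|/val_inj //]; exfalso.
    by move: (key _ _ kl); rewrite E eqxx.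
  by move: (key _ _ lk); rewrite E eqxx.
pose d : 'I_M := Ordinal HM.
have exs : forall k, exists s, prefix (W k) (concat_code om s) && adm A (concat_code om s).
  move=> k; have [eta [Had [s [Hs _]]]] := Hi _ (admW k).
  by exists s; rewrite -Hs prefix_prefix Had.
pose f k := head d (xchoose (exs k)).
have finj : injective f.
  move=> k l E; apply: Winj.
  have /andP[pk ak] := xchooseP (exs k); have /andP[pl al] := xchooseP (exs l).
  move: E pk ak pl al; rewrite /f.
  case: (xchoose (exs k)) => [|i sk].
    move=> _ /prefixP[r] /(congr1 size); rewrite size_cat sizeW /=; lia.
  case: (xchoose (exs l)) => [|j sl].
    move=> _ _ _ /prefixP[r] /(congr1 size); rewrite size_cat sizeW /=; lia.
  move=> /= <- /prefixP[rk Hk] ak /prefixP[rl Hl] al.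
  have ak' := adm_concat Hne ak; have al' := adm_concat Hne al.
  case: (stream om Hsg ak' al') => [[r Hr]|[r Hr]].
    have := congr1 (take (size (W k))) Hr.
    rewrite Hk Hl -catA !take_size_cat // sizeW //.
  have := congr1 (take (size (W k))) Hr.
  rewrite Hk Hl -catA !take_size_cat // sizeW //.
have := leq_card f finj; by rewrite !card_ord ltnn.
Qed.

Theorem mainTheorem7 :
  (forall (N M : nat) (A : zo_mat N) (B : zo_mat M),
     irr_nonperm A -> irr_nonperm B -> top_conj A B -> coded_equiv A B) /\
  (forall (N : nat) (A : zo_mat N) (M : nat) (om : 'I_M -> seq 'I_N),
     irr_nonperm A -> right_markov_code A om ->
     coded_equiv A (code_mat A om)).
Proof.
split.
- move=> N M A B HA HB HAB.
  apply: (@cc_cons _ (mkz B)); last exact: cc_nil.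
  split=> //; split=> //.
  exists N, (@triv N), M, (@triv M); split; first exact: triv_code (proj1 HA) (irrnp_pos HA).
  split; first exact: triv_code (proj1 HB) (irrnp_pos HB).
  by rewrite /= !code_mat_triv.
- move=> N A M om HA Hc.
  have HC : irr_nonperm (code_mat A om) by split; [exact: code_irr | exact: code_nonperm].
  apply: (@cc_cons _ (mkz (code_mat A om))); last exact: cc_nil.
  split=> //; split=> //.
  exists M, om, M, (@triv M); split=> //.
  split; first exact: triv_code (proj1 HC) (irrnp_pos HC).
  rewrite /= code_mat_triv; exact: top_conj_refl.
Qed.
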